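(* Let $M$ be a partial multiplication matrix and let $\pi^\#$ be an $M$-gridded permutation. Then $\pi^\#$ can be expressed as an $M$-sum of $M$-indivisible gridded permutations, $\pi^\#=\pi_1^\#\boxplus\cdots\boxplus\pi_k^\#$. Furthermore, any other expression $\pi^\#=\varphi_1^\#\boxplus\cdots\boxplus\varphi_{\ell}^\#$ of $\pi^\#$ as an $M$-sum of $M$-indivisible gridded permutations satisfies $k=\ell$ and $\{\varphi_1^\#,\dots,\varphi_\ell^\#\}=\{\pi_1^\#,\dots,\pi_k^\#\}$ as multisets.
   Context: A gridding matrix has entries in $\{0,1,-1\}$; an $m\times n$ one has $m$ columns, $n$ rows, $M_{ij}$ in column $i$ from the left and row $j$ from the bottom. An $M$-gridding of a permutation $\pi$ of length $L$ is a choice of vertical lines $\tfrac12=v_0\le\dots\le v_m=L+\tfrac12$ and horizontal lines $\tfrac12=h_0\le\dots\le h_n=L+\tfrac12$, not through points of $\pi$, such that in each cell $C_{ij}=\{v_{i-1}<x<v_i,\ h_{j-1}<y<h_j\}$ the points of $\pi$ are absent if $M_{ij}=0$, increasing if $M_{ij}=1$, decreasing if $M_{ij}=-1$; the result is an $M$-gridded permutation. Two $M$-gridded permutations are regarded as equal if they are order-isomorphic with corresponding points in cells with the same index. $M$ is a partial multiplication matrix: there are fixed $c_1,\dots,c_m,r_1,\dots,r_n\in\{\pm1\}$ with $M_{ij}=c_ir_j$ for each non-zero entry. Column $i$ is oriented left-to-right if $c_i=1$, right-to-left otherwise; row $j$ bottom-to-top if $r_j=1$, top-to-bottom otherwise.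 $M$-sum: for $M$-gridded $\sigma^\#,\tau^\#$, $\sigma^\#\boxplus\tau^\#$ is the $M$-gridded permutation whose points are those of $\sigma^\#$ and $\tau^\#$, each in the cell it occupied, with the relative order (in position and value) among points of $\sigma^\#$ and among points of $\tau^\#$ unchanged, and such that in every column of cells all points of $\sigma^\#$ precede all points of $\tau^\#$ in the column's orientation and in every row of cells all points of $\sigma^\#$ precede all points of $\tau^\#$ in the row's orientation. This operation is associative. $\pi^\#$ is $M$-divisible if $\pi^\#=\sigma^\#\boxplus\tau^\#$ with $\sigma^\#,\tau^\#$ non-empty, and $M$-indivisible otherwise. *)

(* Defs.v *)
From mathcomp Require Import all_boot all_order all_algebra.
Set Implicit Arguments. Unset Strict Implicit. Unset Printing Implicit Defensive.
Import GRing.Theory Num.Theory.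
Local Open Scope ring_scope.

(* A gridding matrix with m columns and n rows: M i j, column i, row j.
   Entries are integers (hypothesised to lie in {0,1,-1} in the theorem). *)

(* A point of a gridded permutation: (position x, value y, column, row).
   Positions and values are 0-based (0..L-1). *)
Definition gpoint (m n : nat) := (nat * nat * 'I_m * 'I_n)%type.
Definition gperm (m n : nat) := seq (gpoint m n).

Section GP.
Variables (m n : nat).
Implicit Types (p q : gpoint m n) (s : gperm m n).

Definition px p : nat := p.1.1.1.
Definition py p : nat := p.1.1.2.
Definition pc p : 'I_m := p.1.2.
Definition pr p : 'I_n := p.2.

(* Canonical representative of an M-gridded permutation of length L = size s:
   points listed by position, positions exactly 0..L-1, values a permutation
   of 0..L-1, the column of a point is nondecreasing in its position and the
   row nondecreasing in its value (so separating grid lines exist), and the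
   points in each cell C_ij are absent/increasing/decreasing according to
   M i j = 0 / 1 / -1. Two M-gridded permutations are equal (order isomorphic
   with the same cells) iff their canonical representatives are equal. *)
Definition gridded (M : 'M[int]_(m, n)) s : Prop :=
  [/\ map px s = iota 0 (size s),
      perm_eq (map py s) (iota 0 (size s)),
      (forall p q, p \in s -> q \in s -> (px p < px q)%N -> (pc p <= pc q)%N),
      (forall p q, p \in s -> q \in s -> (py p < py q)%N -> (pr p <= pr q)%N) &
    (forall p, p \in s -> M (pc p) (pr p) != 0)] /\
      (forall p q, p \in s -> q \in s -> pc p = pc q -> pr p = pr q ->
         (px p < px q)%N ->
         (M (pc p) (pr p) = 1 -> (py p < py q)%N) /\
         (M (pc p) (pr p) = -1 -> (py q < py p)%N)).

(* The M-sum sigma [+] tau with respect to column orientations c and row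
   orientations r (c i = 1 : left-to-right, -1 : right-to-left;
   r j = 1 : bottom-to-top, -1 : top-to-bottom).
   A point of sigma is moved right past the tau-points of earlier columns,
   and past the tau-points of its own column when that column is oriented
   right-to-left (so sigma precedes tau in the column's orientation);
   symmetrically for tau, and likewise for values and rows. *)
Definition dx_s (c : 'I_m -> int) tau p : nat :=
  count (fun q => (pc q < pc p)%N || ((pc q == pc p) && (c (pc p) == -1))) tau.
Definition dy_s (r : 'I_n -> int) tau p : nat :=
  count (fun q => (pr q < pr p)%N || ((pr q == pr p) && (r (pr p) == -1))) tau.
Definition dx_t (c : 'I_m -> int) sigma q : nat :=
  count (fun p => (pc p < pc q)%N || ((pc p == pc q) && (c (pc q) == 1))) sigma.
Definition dy_t (r : 'I_n -> int) sigma q : nat :=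
  count (fun p => (pr p < pr q)%N || ((pr p == pr q) && (r (pr q) == 1))) sigma.

Definition msum (c : 'I_m -> int) (r : 'I_n -> int) (sigma tau : gperm m n)
  : gperm m n :=
  sort (fun p q : gpoint m n => (px p <= px q)%N)
    ([seq ((px p + dx_s c tau p)%N, (py p + dy_s r tau p)%N, pc p, pr p)
        | p <- sigma] ++
     [seq ((px q + dx_t c sigma q)%N, (py q + dy_t r sigma q)%N, pc q, pr q)
        | q <- tau]).

Definition msumL c r (ps : seq (gperm m n)) : gperm m n :=
  foldr (msum c r) [::] ps.

Definition divisible (M : 'M[int]_(m, n)) c r s : Prop :=
  exists sigma tau, [/\ gridded M sigma, gridded M tau,
    sigma != [::], tau != [::] & msum c r sigma tau = s].

Definition indivisible (M : 'M[int]_(m, n)) c r s : Prop :=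
  [/\ gridded M s, s != [::] & ~ divisible M c r s].

End GP.

(* Main.v *)
Require Import Defs.
From mathcomp Require Import all_boot all_order all_algebra.
From mathcomp Require Import zify.
Import GRing.Theory Num.Theory.
Set Implicit Arguments. Unset Strict Implicit. Unset Printing Implicit Defensive.

Section Rk.
Variables (T : eqType) (k : T -> nat).
Definition rk (w : seq T) z := count (fun z' => k z' < k z) w.

Lemma rk_mono w a b : k a <= k b -> rk w a <= rk w b.
Proof. move=> h; apply: sub_count => z /= hz; exact: leq_trans hz h. Qed.

Lemma rk_lt w a b : a \in w -> k a < k b -> rk w a < rk w b.
Proof.
move=> aw hab.
have h1 : count (predU (fun z => k z < k a) (pred1 a)) w = rk w a + count (pred1 a) w.
  rewrite -[RHS]count_predUI.
  rewrite (@eq_count _ (predI _ _) pred0) ?count_pred0 ?addn0 //.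
  by move=> z /=; case: eqP => [->|]; rewrite ?ltnn ?andbF ?andbT.
have h2 : 0 < count (pred1 a) w by rewrite -has_count has_pred1.
have h3 : count (predU (fun z => k z < k a) (pred1 a)) w <= rk w b.
  apply: sub_count => z /= /orP[hz|/eqP->] //; exact: ltn_trans hz hab.
rewrite h1 in h3; apply: leq_trans h3; rewrite -addn1 leq_add2l //.
Qed.

Lemma rk_ltE w a b : a \in w -> (rk w a < rk w b) = (k a < k b).
Proof.
move=> aw; case: (ltnP (k a) (k b)) => h; first by rewrite rk_lt.
by apply/negbTE; rewrite -leqNgt rk_mono.
Qed.

Lemma rk_lt_size w a : a \in w -> rk w a < size w.
Proof.
move=> aw; rewrite -(count_predC (fun z' => k z' < k a) w) -{1}[rk w a]addn0 ltn_add2l.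
by rewrite -has_count; apply/hasP; exists a => //=; rewrite ltnn.
Qed.

Lemma rk_inj w : {in w &, injective k} -> {in w &, injective (rk w)}.
Proof.
move=> ik a b aw bw e; apply: ik => //.
case: (ltngtP (k a) (k b)) => // h.
  by have := rk_lt aw h; rewrite e ltnn.
by have := rk_lt bw h; rewrite e ltnn.
Qed.

Lemma rk_perm w : uniq w -> {in w &, injective k} ->
  perm_eq (map (rk w) w) (iota 0 (size w)).
Proof.
move=> uw ik.
have u1 : uniq (map (rk w) w) by rewrite map_inj_in_uniq //; exact: rk_inj.
have sub : {subset map (rk w) w <= iota 0 (size w)}.
  by move=> x /mapP[z zw ->]; rewrite mem_iota add0n rk_lt_size.
have [_ e] := @uniq_min_size _ (map (rk w) w) (iota 0 (size w)) u1 sub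
  ltac:(by rewrite size_map size_iota).
by apply: uniq_perm => //; exact: iota_uniq.
Qed.
End Rk.

Definition pxle m n := fun p q : gpoint m n => px p <= px q.

Lemma sort_inj m n (u v : seq (gpoint m n)) : perm_eq u v -> {in u &, injective (@px m n)} ->
  sort (@pxle m n) u = sort (@pxle m n) v.
Proof.
move=> puv ij; apply/perm_sort_inP => //.
- by move=> x y _ _; exact: leq_total.
- by move=> x y z _ _ _; exact: leq_trans.
- by move=> x y xu yu /anti_leq e; exact: ij.
Qed.

Section Std.
Variables (m n : nat) (T : eqType) (kx ky : T -> nat) (col : T -> 'I_m) (row : T -> 'I_n).
Definition stdp w z : gpoint m n := (rk kx w z, rk ky w z, col z, row z).
Definition std w := sort (@pxle m n) (map (stdp w) w).

Record gcfg (M : 'M[int]_(m, n)) w : Prop := GCfg {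
  g_uniq : uniq w;
  g_injx : {in w &, injective kx};
  g_injy : {in w &, injective ky};
  g_col : {in w &, forall a b, kx a < kx b -> col a <= col b};
  g_row : {in w &, forall a b, ky a < ky b -> row a <= row b};
  g_nz : {in w, forall a, M (col a) (row a) != 0%R};
  g_cell : {in w &, forall a b, col a = col b -> row a = row b -> kx a < kx b ->
         (M (col a) (row a) = 1%R -> ky a < ky b) /\ (M (col a) (row a) = (-1)%R -> ky b < ky a)}
}.

Lemma size_std w : size (std w) = size w.
Proof. by rewrite size_sort size_map. Qed.

Lemma mem_std w p : (p \in std w) = (p \in map (stdp w) w).
Proof. by rewrite mem_sort. Qed.

Lemma std_gridded M w : gcfg M w -> gridded M (std w).
Proof.
case=> uw ix iy gc gr gnz gcell.
have memP p : p \in std w -> exists2 a, a \in w & p = stdp w a.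
  by rewrite mem_std => /mapP.
split; [split|].
- apply: (@sorted_eq _ leq leq_trans anti_leq); last first.
  + rewrite size_std; apply: perm_trans (rk_perm uw ix).
    rewrite (_ : map (rk kx w) w = map (@px m n) (map (stdp w) w)); last by rewrite -map_comp.
    by apply: perm_map; rewrite /std perm_sort.
  + exact: iota_sorted.
  + rewrite sorted_map; apply: sort_sorted => x y; exact: leq_total.
- rewrite size_std; apply: perm_trans (rk_perm uw iy).
  rewrite (_ : map (rk ky w) w = map (@py m n) (map (stdp w) w)); last by rewrite -map_comp.
  by apply: perm_map; rewrite /std perm_sort.
- move=> p q /memP[a aw ->] /memP[b bw ->] /=; rewrite /px /pc /= rk_ltE //.
  exact: gc.
- move=> p q /memP[a aw ->] /memP[b bw ->] /=; rewrite /py /pr /= rk_ltE //.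
  exact: gr.
- by move=> p /memP[a aw ->]; exact: gnz.
- move=> p q /memP[a aw ->] /memP[b bw ->]; rewrite /px /py /pc /pr /= => ec er.
  by rewrite !rk_ltE //; exact: gcell.
Qed.
End Std.

Lemma std_iso m n (T1 T2 : eqType) (kx1 ky1 : T1 -> nat) (col1 : T1 -> 'I_m) (row1 : T1 -> 'I_n)
  (kx2 ky2 : T2 -> nat) (col2 : T2 -> 'I_m) (row2 : T2 -> 'I_n) (w1 : seq T1) (w2 : seq T2)
  (f : T1 -> T2) :
  perm_eq (map f w1) w2 -> {in w2 &, injective kx2} ->
  {in w1 &, forall a b, (kx1 a < kx1 b) = (kx2 (f a) < kx2 (f b))} ->
  {in w1 &, forall a b, (ky1 a < ky1 b) = (ky2 (f a) < ky2 (f b))} ->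
  {in w1, forall a, col1 a = col2 (f a)} -> {in w1, forall a, row1 a = row2 (f a)} ->
  std kx1 ky1 col1 row1 w1 = std kx2 ky2 col2 row2 w2.
Proof.
move=> pw ix hx hy hc hr.
have e : map (stdp kx1 ky1 col1 row1 w1) w1 = map (stdp kx2 ky2 col2 row2 w2) (map f w1).
  rewrite -map_comp; apply/eq_in_map => a aw /=.
  rewrite /stdp /rk hc ?hr //; congr (_, _, _, _).
  + rewrite -(permP pw) count_map; apply: eq_in_count => z zw /=; exact: hx.
  + rewrite -(permP pw) count_map; apply: eq_in_count => z zw /=; exact: hy.
rewrite /std e; apply: sort_inj; first exact: perm_map.
move=> p q /mapP[a aw ->] /mapP[b bw ->] /= E.
have aw2 : a \in w2 by rewrite -(perm_mem pw).
have bw2 : b \in w2 by rewrite -(perm_mem pw).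
by rewrite (rk_inj ix aw2 bw2 E).
Qed.

Lemma uniq_map_inj (T1 T2 : eqType) (f : T1 -> T2) s :
  uniq (map f s) -> {in s &, injective f}.
Proof.
elim: s => //= x s IH /andP[nx us] a b; rewrite !inE => /orP[/eqP->|as_] /orP[/eqP->|bs] e //.
- by move: nx; rewrite e map_f.
- by move: nx; rewrite -e map_f.
- exact: IH.
Qed.

Lemma count_iota_lt k x : x <= k -> count (fun y => y < x) (iota 0 k) = x.
Proof.
move=> h; rewrite -(subnKC h) iotaD count_cat.
rewrite (@eq_in_count _ _ predT (iota 0 x)); last by move=> y; rewrite mem_iota => /andP[].
rewrite count_predT size_iota (@eq_in_count _ _ pred0); first by rewrite count_pred0 addn0.
by move=> y; rewrite mem_iota add0n => /andP[h1 _] /=; rewrite ltnNge h1.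
Qed.

Section Grid.
Variables (m n : nat).
Local Notation stdG := (std (@px m n) (@py m n) (@pc m n) (@pr m n)).
Local Notation rkx := (rk (@px m n)).
Local Notation rky := (rk (@py m n)).

Lemma gridded_rk M s : gridded M s ->
  {in s, forall p, rkx s p = px p} /\ {in s, forall p, rky s p = py p}.
Proof.
case=> [[hx hy _ _ _] _]; split => p ps.
- rewrite /rk -(count_map _ (fun y => y < px p)) hx count_iota_lt //.
  have : px p \in map (@px m n) s by rewrite map_f.
  by rewrite hx mem_iota => /andP[_ ]; rewrite add0n => /ltnW.
- rewrite /rk -(count_map _ (fun y => y < py p)) (permP hy) count_iota_lt //.
  have : py p \in map (@py m n) s by rewrite map_f.
  by rewrite (perm_mem hy) mem_iota => /andP[_ ]; rewrite add0n => /ltnW.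
Qed.

Lemma gridded_gcfg M s : gridded M s -> gcfg (@px m n) (@py m n) (@pc m n) (@pr m n) M s.
Proof.
move=> G; case: (G) => [[hx hy hc hr hnz] hcell].
have ux : uniq (map (@px m n) s) by rewrite hx iota_uniq.
have uy : uniq (map (@py m n) s) by rewrite (perm_uniq hy) iota_uniq.
split => //.
- exact: map_uniq ux.
- exact: uniq_map_inj.
- exact: uniq_map_inj.
Qed.

Lemma gridded_std M s : gridded M s -> stdG s = s.
Proof.
move=> G; have [rx ry] := gridded_rk G; case: (G) => [[hx _ _ _ _] _].
rewrite /std (_ : map _ s = s); last first.
  rewrite -[RHS]map_id; apply/eq_in_map => p ps.
  by rewrite /stdp rx // ry //; case: p ps => [[[? ?] ?] ?].
apply: sorted_sort; first by move=> x y z; exact: leq_trans.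
by have := iota_sorted 0 (size s); rewrite -hx sorted_map.
Qed.

End Grid.

Lemma lex (x1 x2 y1 y2 B : nat) : y1 < B -> y2 < B ->
  (x1 * B + y1 < x2 * B + y2) = (x1 < x2) || ((x1 == x2) && (y1 < y2)).
Proof.
move=> h1 h2; case: (ltngtP x1 x2) => h /=.
- apply/idP; apply: (@leq_trans (x1.+1 * B)); first by rewrite mulSn addnC ltn_add2r.
  by apply: leq_trans (leq_addr _ _); rewrite leq_mul2r h orbT.
- apply/negbTE; rewrite -leqNgt; apply: (@leq_trans (x2.+1 * B)); first by rewrite mulSn addnC ltnW // ltn_add2r.
  by apply: leq_trans (leq_addr _ _); rewrite leq_mul2r h orbT.
- by rewrite h ltn_add2l.
Qed.
Lemma lt2 a b (sa sb : bool) : a < b -> 2*a + sa < 2*b + sb.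
Proof.
move=> h; apply: (@leq_trans (2 * a.+1)); last by rewrite (leq_trans _ (leq_addr _ _)) // leq_mul2l h.
by rewrite mulnS (addnC 2) ltn_add2l; case: sa.
Qed.
Lemma kcmp (a b : nat) (sa sb : bool) (ya yb B : nat) : ya < B -> yb < B ->
 ((2*a + sa) * B + ya < (2*b+sb)*B + yb) = (a < b) || ((a == b) && ((sa < sb) || ((sa == sb) && (ya < yb)))).
Proof.
move=> h1 h2; rewrite lex //.
case: (ltngtP a b) => h /=.
- by rewrite lt2.
- by rewrite ltnNge ltnW ?lt2 //= (gtn_eqF (@lt2 b a sb sa h)).
- by rewrite h ltn_add2l eqn_add2l; case: sa; case: sb.
Qed.
Lemma keq (a b : nat) (sa sb : bool) (ya yb B : nat) : ya < B -> yb < B ->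
 ((2*a + sa) * B + ya == (2*b+sb)*B + yb) = [&& a == b, sa == sb & ya == yb].
Proof.
move=> h1 h2; rewrite eqn_leq (leqNgt ((2*a+sa)*B+ya)) (leqNgt ((2*b+sb)*B+yb)) !kcmp //.
case: (ltngtP a b) => h //=; case: sa; case: sb; case: (ltngtP ya yb) => h' //.
Qed.

Lemma kcmp_same k (i j : 'I_k) (si sj : bool) ya yb B : ya < B -> yb < B -> (i = j -> si = sj) ->
 ((2*i + si)*B + ya < (2*j+sj)*B + yb) = (i < j) || ((i == j :> nat) && (ya < yb)).
Proof.
move=> h1 h2 hs; rewrite kcmp //; case: (eqVneq i j) => [e|ne].
  by rewrite -(hs e) e !eqxx !ltnn /=.
by rewrite (_ : (i == j :> nat) = false) ?andbF //; apply/negbTE.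
Qed.

Lemma kcmp_cross k (i j : 'I_k) (si sj : bool) ya yb B : ya < B -> yb < B -> (i = j -> si != sj) ->
 ((2*i + si)*B + ya < (2*j+sj)*B + yb) = (i < j) || ((i == j :> nat) && (si < sj)).
Proof.
move=> h1 h2 hs; rewrite kcmp //; case: (eqVneq i j) => [e|ne].
  by move: (hs e); rewrite e eqxx /=; clear hs; case: si; case: sj.
by rewrite (_ : (i == j :> nat) = false) ?andbF //; apply/negbTE.
Qed.

Lemma colcmp m n (T : eqType) (kx ky : T -> nat) (col : T -> 'I_m) (row : T -> 'I_n) M w :
  gcfg kx ky col row M w -> {in w &, forall a b,
   (kx a < kx b) = (col a < col b) || ((col a == col b :> nat) && (kx a < kx b))}.
Proof.
case=> _ ix _ gc _ _ _ a b aw bw; case: (ltngtP (col a) (col b)) => h /=.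
- case: (ltngtP (kx a) (kx b)) => // h'.
    by have := gc _ _ bw aw h'; rewrite leqNgt h.
  by move: h; rewrite (ix _ _ aw bw h') ltnn.
- apply/negbTE; rewrite -leqNgt leq_eqVlt; case: (ltngtP (kx b) (kx a)) => //= h'.
  by have := gc _ _ aw bw h'; rewrite leqNgt h.
- by [].
Qed.

Lemma rowcmp m n (T : eqType) (kx ky : T -> nat) (col : T -> 'I_m) (row : T -> 'I_n) M w :
  gcfg kx ky col row M w -> {in w &, forall a b,
   (ky a < ky b) = (row a < row b) || ((row a == row b :> nat) && (ky a < ky b))}.
Proof.
case=> _ _ iy _ gr _ _ a b aw bw; case: (ltngtP (row a) (row b)) => h /=.
- case: (ltngtP (ky a) (ky b)) => // h'.
    by have := gr _ _ bw aw h'; rewrite leqNgt h.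
  by move: h; rewrite (iy _ _ aw bw h') ltnn.
- apply/negbTE; rewrite -leqNgt leq_eqVlt; case: (ltngtP (ky b) (ky a)) => //= h'.
  by have := gr _ _ aw bw h'; rewrite leqNgt h.
- by [].
Qed.

From mathcomp Require Import all_boot all_order all_algebra.
Import GRing.Theory Num.Theory.
Set Implicit Arguments. Unset Strict Implicit. Unset Printing Implicit Defensive.

Lemma gx_lt m n M (s : gperm m n) p : gridded M s -> p \in s -> px p < size s.
Proof.
case=> [[hx _ _ _ _] _] ps; have : px p \in map (@px m n) s by rewrite map_f.
by rewrite hx mem_iota add0n => /andP[].
Qed.

Lemma gy_lt m n M (s : gperm m n) p : gridded M s -> p \in s -> py p < size s.
Proof.
case=> [[_ hy _ _ _] _] ps; have : py p \in map (@py m n) s by rewrite map_f.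
by rewrite (perm_mem hy) mem_iota add0n => /andP[].
Qed.

Section Msum.
Variables (m n : nat) (c : 'I_m -> int) (r : 'I_n -> int).
Hypothesis Hc : forall i, c i = 1%R \/ c i = (-1)%R.
Hypothesis Hr : forall j, r j = 1%R \/ r j = (-1)%R.

Lemma c_neq i : (c i == 1%R) != (c i == (-1)%R).
Proof. by case: (Hc i) => ->. Qed.
Lemma r_neq j : (r j == 1%R) != (r j == (-1)%R).
Proof. by case: (Hr j) => ->. Qed.

Variables (M : 'M[int]_(m, n)) (sg tau : gperm m n).
Hypotheses (Gs : gridded M sg) (Gt : gridded M tau).

Definition BB := size sg + size tau.
Definition tg : seq (gpoint m n + gpoint m n)%type := map inl sg ++ map inr tau.
Definition kxm (z : (gpoint m n + gpoint m n)%type) : nat :=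
  match z with
  | inl p => (2 * pc p + (c (pc p) == (-1)%R)) * BB + px p
  | inr q => (2 * pc q + (c (pc q) == 1%R)) * BB + px q end.
Definition kym (z : (gpoint m n + gpoint m n)%type) : nat :=
  match z with
  | inl p => (2 * pr p + (r (pr p) == (-1)%R)) * BB + py p
  | inr q => (2 * pr q + (r (pr q) == 1%R)) * BB + py q end.
Definition colm (z : (gpoint m n + gpoint m n)%type) : 'I_m :=
  match z with inl p => pc p | inr q => pc q end.
Definition rowm (z : (gpoint m n + gpoint m n)%type) : 'I_n :=
  match z with inl p => pr p | inr q => pr q end.

Lemma bxl p : p \in sg -> px p < BB.
Proof. by move=> ps; apply: leq_trans (gx_lt Gs ps) (leq_addr _ _). Qed.
Lemma byl p : p \in sg -> py p < BB.
Proof. by move=> ps; apply: leq_trans (gy_lt Gs ps) (leq_addr _ _). Qed.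
Lemma bxr p : p \in tau -> px p < BB.
Proof. by move=> ps; apply: leq_trans (gx_lt Gt ps) (leq_addl _ _). Qed.
Lemma byr p : p \in tau -> py p < BB.
Proof. by move=> ps; apply: leq_trans (gy_lt Gt ps) (leq_addl _ _). Qed.

Lemma kx_ll a b : a \in sg -> b \in sg -> (kxm (inl a) < kxm (inl b)) = (px a < px b).
Proof.
move=> aw bw; rewrite /kxm kcmp_same ?bxl //; last by move=> ->.
by rewrite [RHS](colcmp (gridded_gcfg Gs)).
Qed.
Lemma kx_rr a b : a \in tau -> b \in tau -> (kxm (inr a) < kxm (inr b)) = (px a < px b).
Proof.
move=> aw bw; rewrite /kxm kcmp_same ?bxr //; last by move=> ->.
by rewrite [RHS](colcmp (gridded_gcfg Gt)).
Qed.
Lemma ky_ll a b : a \in sg -> b \in sg -> (kym (inl a) < kym (inl b)) = (py a < py b).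
Proof.
move=> aw bw; rewrite /kym kcmp_same ?byl //; last by move=> ->.
by rewrite [RHS](rowcmp (gridded_gcfg Gs)).
Qed.
Lemma ky_rr a b : a \in tau -> b \in tau -> (kym (inr a) < kym (inr b)) = (py a < py b).
Proof.
move=> aw bw; rewrite /kym kcmp_same ?byr //; last by move=> ->.
by rewrite [RHS](rowcmp (gridded_gcfg Gt)).
Qed.

Lemma kx_rl q p : q \in tau -> p \in sg -> (kxm (inr q) < kxm (inl p)) =
  (pc q < pc p) || ((pc q == pc p) && (c (pc p) == (-1)%R)).
Proof.
move=> qw pw; rewrite /kxm kcmp_cross ?(bxl pw) ?(bxr qw) //; last by move=> ->; move: (c_neq (pc p)); case: (c (pc p) == 1%R); case: (c (pc p) == (-1)%R).
case: (eqVneq (pc q) (pc p)) => [->|ne]; last by rewrite (_ : (pc q == pc p :> nat) = false) //; apply/negbTE.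
by rewrite eqxx ltnn /=; case: (Hc (pc p)) => ->.
Qed.
Lemma kx_lr p q : p \in sg -> q \in tau -> (kxm (inl p) < kxm (inr q)) =
  (pc p < pc q) || ((pc p == pc q) && (c (pc q) == 1%R)).
Proof.
move=> pw qw; rewrite /kxm kcmp_cross ?(bxl pw) ?(bxr qw) //; last by move=> ->; move: (c_neq (pc q)); case: (c (pc q) == 1%R); case: (c (pc q) == (-1)%R).
case: (eqVneq (pc p) (pc q)) => [->|ne]; last by rewrite (_ : (pc p == pc q :> nat) = false) //; apply/negbTE.
by rewrite eqxx ltnn /=; case: (Hc (pc q)) => ->.
Qed.
Lemma ky_rl q p : q \in tau -> p \in sg -> (kym (inr q) < kym (inl p)) =
  (pr q < pr p) || ((pr q == pr p) && (r (pr p) == (-1)%R)).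
Proof.
move=> qw pw; rewrite /kym kcmp_cross ?(byl pw) ?(byr qw) //; last by move=> ->; move: (r_neq (pr p)); case: (r (pr p) == 1%R); case: (r (pr p) == (-1)%R).
case: (eqVneq (pr q) (pr p)) => [->|ne]; last by rewrite (_ : (pr q == pr p :> nat) = false) //; apply/negbTE.
by rewrite eqxx ltnn /=; case: (Hr (pr p)) => ->.
Qed.
Lemma ky_lr p q : p \in sg -> q \in tau -> (kym (inl p) < kym (inr q)) =
  (pr p < pr q) || ((pr p == pr q) && (r (pr q) == 1%R)).
Proof.
move=> pw qw; rewrite /kym kcmp_cross ?(byl pw) ?(byr qw) //; last by move=> ->; move: (r_neq (pr q)); case: (r (pr q) == 1%R); case: (r (pr q) == (-1)%R).
case: (eqVneq (pr p) (pr q)) => [->|ne]; last by rewrite (_ : (pr p == pr q :> nat) = false) //; apply/negbTE.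
by rewrite eqxx ltnn /=; case: (Hr (pr q)) => ->.
Qed.

Lemma gl x : x \in sg -> stdp kxm kym colm rowm tg (inl x) =
  (px x + dx_s c tau x, py x + dy_s r tau x, pc x, pr x).
Proof.
move=> ps; rewrite /stdp /rk !count_cat !count_map; congr (_, _, _, _); congr (_ + _).
- rewrite -{1}((gridded_rk Gs).1 x ps) /rk.
  by apply: eq_in_count => a aw /=; rewrite kx_ll.
- by apply: eq_in_count => a aw /=; rewrite kx_rl.
- rewrite -{1}((gridded_rk Gs).2 x ps) /rk.
  by apply: eq_in_count => a aw /=; rewrite ky_ll.
- by apply: eq_in_count => a aw /=; rewrite ky_rl.
Qed.

Lemma gr x : x \in tau -> stdp kxm kym colm rowm tg (inr x) =
  (px x + dx_t c sg x, py x + dy_t r sg x, pc x, pr x).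
Proof.
move=> ps; rewrite /stdp /rk !count_cat !count_map [px x + _]addnC [py x + _]addnC.
congr (_, _, _, _); congr (_ + _).
- by apply: eq_in_count => a aw /=; rewrite kx_lr.
- rewrite -{1}((gridded_rk Gt).1 x ps) /rk.
  by apply: eq_in_count => a aw /=; rewrite kx_rr.
- by apply: eq_in_count => a aw /=; rewrite ky_lr.
- rewrite -{1}((gridded_rk Gt).2 x ps) /rk.
  by apply: eq_in_count => a aw /=; rewrite ky_rr.
Qed.

Lemma msum_std : msum c r sg tau = std kxm kym colm rowm tg.
Proof.
rewrite /msum /std /pxle /tg map_cat -!map_comp; congr (sort _ (_ ++ _)).
- by apply/eq_in_map => p ps /=; rewrite gl.
- by apply/eq_in_map => p ps /=; rewrite gr.
Qed.


Lemma inl_inj' : injective (@inl (gpoint m n) (gpoint m n)).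
Proof. by move=> x y []. Qed.
Lemma inr_inj' : injective (@inr (gpoint m n) (gpoint m n)).
Proof. by move=> x y []. Qed.

Lemma mem_tgl a : (inl a \in tg) = (a \in sg).
Proof.
rewrite /tg mem_cat (mem_map inl_inj') (_ : (inl a \in map inr tau) = false) ?orbF //.
by apply/negbTE/mapP => -[].
Qed.
Lemma mem_tgr a : (inr a \in tg) = (a \in tau).
Proof.
rewrite /tg mem_cat (mem_map inr_inj') (_ : (inr a \in map inl sg) = false) //.
by apply/negbTE/mapP => -[].
Qed.

Ltac bnd := first [apply: bxl; assumption | apply: bxr; assumption
                 | apply: byl; assumption | apply: byr; assumption].

Lemma colm_l a : colm (inl a) = pc a. Proof. by []. Qed.
Lemma colm_r a : colm (inr a) = pc a. Proof. by []. Qed.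
Lemma rowm_l a : rowm (inl a) = pr a. Proof. by []. Qed.
Lemma rowm_r a : rowm (inr a) = pr a. Proof. by []. Qed.

Hypothesis HM : forall i j, M i j != 0%R -> M i j = (c i * r j)%R.

Lemma msum_gcfg : gcfg kxm kym colm rowm M tg.
Proof.
have [us ixs iys gcs grs nzs cells] := gridded_gcfg Gs.
have [ut ixt iyt gct grt nzt cellt] := gridded_gcfg Gt.
split.
- rewrite cat_uniq !map_inj_uniq ?us ?ut //= ?andbT; [|exact: inr_inj'|exact: inl_inj'].
  by apply/hasPn => z /mapP[q _ ->]; apply/mapP => -[].
- move=> [a|a] [b|b]; rewrite ?mem_tgl ?mem_tgr => aw bw /eqP; rewrite /kxm keq;
    try bnd; case/and3P => e1 e2 e3.
  + by congr inl; apply: ixs => //; exact/eqP.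
  + have e : pc a = pc b := ord_inj (eqP e1).
    by move: e2 (c_neq (pc b)); rewrite e; case: (c _ == 1%R); case: (c _ == (-1)%R).
  + have e : pc a = pc b := ord_inj (eqP e1).
    by move: e2 (c_neq (pc b)); rewrite e; case: (c _ == 1%R); case: (c _ == (-1)%R).
  + by congr inr; apply: ixt => //; exact/eqP.
- move=> [a|a] [b|b]; rewrite ?mem_tgl ?mem_tgr => aw bw /eqP; rewrite /kym keq;
    try bnd; case/and3P => e1 e2 e3.
  + by congr inl; apply: iys => //; exact/eqP.
  + have e : pr a = pr b := ord_inj (eqP e1).
    by move: e2 (r_neq (pr b)); rewrite e; case: (r _ == 1%R); case: (r _ == (-1)%R).
  + have e : pr a = pr b := ord_inj (eqP e1).
    by move: e2 (r_neq (pr b)); rewrite e; case: (r _ == 1%R); case: (r _ == (-1)%R).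
  + by congr inr; apply: iyt => //; exact/eqP.
- move=> [a|a] [b|b]; rewrite ?mem_tgl ?mem_tgr => aw bw; rewrite /kxm kcmp; try bnd;
    by case/orP => [/ltnW //|/andP[/eqP -> _]].
- move=> [a|a] [b|b]; rewrite ?mem_tgl ?mem_tgr => aw bw; rewrite /kym kcmp; try bnd;
    by case/orP => [/ltnW //|/andP[/eqP -> _]].
- by move=> [a|a]; rewrite ?mem_tgl ?mem_tgr => aw /=; [apply: nzs | apply: nzt].
- move=> [a|a] [b|b]; rewrite ?mem_tgl ?mem_tgr ?colm_l ?colm_r ?rowm_l ?rowm_r => aw bw ec er.
  + by rewrite kx_ll // ky_ll // ky_ll //; exact: cells.
  + rewrite kx_lr // ky_lr // ky_rl // ec er !ltnn !eqxx /= => /eqP h.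
    have eM := HM (nzs _ aw); rewrite ec er h mul1r in eM.
    by rewrite eM; split => ->.
  + rewrite kx_rl // ky_rl // ky_lr // ec er !ltnn !eqxx /= => /eqP h.
    have eM := HM (nzt _ aw); rewrite ec er h mulN1r in eM.
    rewrite eM; split => E; move: E; case: (Hr (pr b)) => ->; rewrite ?opprK //.
  + by rewrite kx_rr // ky_rr // ky_rr //; exact: cellt.
Qed.

Lemma msum_gridded : gridded M (msum c r sg tau).
Proof. by rewrite msum_std; apply: std_gridded; exact: msum_gcfg. Qed.

End Msum.

From mathcomp Require Import all_boot all_order all_algebra.
Import GRing.Theory Num.Theory.
Set Implicit Arguments. Unset Strict Implicit. Unset Printing Implicit Defensive.

Lemma perm_symI (T : eqType) (s1 s2 : seq T) : perm_eq s1 s2 -> perm_eq s2 s1.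
Proof. by rewrite perm_sym. Qed.

Lemma perm_sortl (T : eqType) (leT : rel T) s : perm_eq (sort leT s) s.
Proof. by rewrite perm_sort. Qed.

Lemma gcfg_filter m n (T : eqType) kx ky (col : T -> 'I_m) (row : T -> 'I_n) M w P :
  gcfg kx ky col row M w -> gcfg kx ky col row M (filter P w).
Proof.
case=> u ix iy gc gr nz cell.
have sub : {subset filter P w <= w} by move=> x; rewrite mem_filter => /andP[].
split; first exact: filter_uniq.
- by move=> a b /sub aw /sub bw; apply: ix.
- by move=> a b /sub aw /sub bw; apply: iy.
- by move=> a b /sub aw /sub bw; apply: gc.
- by move=> a b /sub aw /sub bw; apply: gr.
- by move=> a /sub aw; apply: nz.
- by move=> a b /sub aw /sub bw; apply: cell.
Qed.

Section PX.
Variables (m n : nat) (T : eqType) (kx ky : T -> nat) (col : T -> 'I_m) (row : T -> 'I_n).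
Lemma px_stdp w z : px (stdp kx ky col row w z) = rk kx w z. Proof. by []. Qed.
Lemma py_stdp w z : py (stdp kx ky col row w z) = rk ky w z. Proof. by []. Qed.
Lemma pc_stdp w z : pc (stdp kx ky col row w z) = col z. Proof. by []. Qed.
Lemma pr_stdp w z : pr (stdp kx ky col row w z) = row z. Proof. by []. Qed.
End PX.

Section Split.
Variables (m n : nat) (c : 'I_m -> int) (r : 'I_n -> int).
Hypothesis Hc : forall i, c i = 1%R \/ c i = (-1)%R.
Hypothesis Hr : forall j, r j = 1%R \/ r j = (-1)%R.
Variable (M : 'M[int]_(m, n)).
Hypothesis HM : forall i j, M i j != 0%R -> M i j = (c i * r j)%R.
Local Notation stdG := (std (@px m n) (@py m n) (@pc m n) (@pr m n)).
Local Notation stdpG := (stdp (@px m n) (@py m n) (@pc m n) (@pr m n)).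

Definition split_ok (V : gperm m n) (S : pred (gpoint m n)) :=
  {in V &, forall a b, S a -> ~~ S b ->
     (pc a = pc b -> (c (pc a) = 1%R -> px a < px b) /\ (c (pc a) = (-1)%R -> px b < px a)) /\
     (pr a = pr b -> (r (pr a) = 1%R -> py a < py b) /\ (r (pr a) = (-1)%R -> py b < py a))}.

Variable V : gperm m n.
Hypothesis GV : gcfg (@px m n) (@py m n) (@pc m n) (@pr m n) M V.

Lemma ord_neq_nat k (i j : 'I_k) : i != j -> (i == j :> nat) = false.
Proof. by move/negbTE. Qed.

Lemma splitA S : split_ok V S ->
  msum c r (stdG (filter S V)) (stdG (filter (predC S) V)) = stdG V.
Proof.
move=> hS.
set V1 := filter S V; set V2 := filter (predC S) V.
have G1 : gridded M (stdG V1) by apply: std_gridded; apply: gcfg_filter.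
have G2 : gridded M (stdG V2) by apply: std_gridded; apply: gcfg_filter.
rewrite (msum_std Hc Hr G1 G2).
pose f p := if S p then inl (stdpG V1 p) else inr (stdpG V2 p).
have mem1 a : a \in V1 -> stdpG V1 a \in stdG V1 by move=> aw; rewrite mem_std map_f.
have mem2 a : a \in V2 -> stdpG V2 a \in stdG V2 by move=> aw; rewrite mem_std map_f.
have in1 a : a \in V -> S a -> a \in V1 by move=> aw Sa; rewrite mem_filter Sa aw.
have in2 a : a \in V -> ~~ S a -> a \in V2 by move=> aw Sa; rewrite mem_filter /= Sa aw.
symmetry; apply: (std_iso (f := f)).
- have pV : perm_eq V (V1 ++ V2) by rewrite perm_sym perm_filterC.
  apply: perm_trans (perm_map f pV) _; rewrite map_cat /tg; apply: perm_cat.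
  + rewrite (_ : map f V1 = map inl (map (stdpG V1) V1)); last first.
      rewrite -map_comp; apply/eq_in_map => x; rewrite mem_filter => /andP[Sx _].
      by rewrite /f Sx.
    by apply: perm_map; rewrite perm_sym perm_sortl.
  + rewrite (_ : map f V2 = map inr (map (stdpG V2) V2)); last first.
      rewrite -map_comp; apply/eq_in_map => x; rewrite mem_filter => /andP[Sx _].
      by rewrite /f (negbTE Sx).
    by apply: perm_map; rewrite perm_sym perm_sortl.
- exact: g_injx (msum_gcfg Hc Hr G1 G2 HM).
- move=> a b aw bw; rewrite /f; case Sa: (S a); case Sb: (S b).
  + by rewrite (kx_ll c (stdG V2) G1 (mem1 _ (in1 _ aw Sa)) (mem1 _ (in1 _ bw Sb))) !px_stdp rk_ltE ?in1.
  + rewrite (kx_lr Hc G1 G2 (mem1 _ (in1 _ aw Sa)) (mem2 _ (in2 _ bw (negbT Sb)))) !pc_stdp.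
    rewrite (colcmp GV aw bw); case: (eqVneq (pc a) (pc b)) => [e|ne]; last first.
      by rewrite ?(ord_neq_nat ne) ?(negbTE ne) ?andbF ?orbF.
    have [hc _] := hS a b aw bw Sa (negbT Sb); move: (hc e); rewrite e !ltnn eqxx /=.
    case: (Hc (pc b)) => -> [h1 h2]; first by rewrite (h1 erefl).
    by rewrite ltnNge (ltnW (h2 erefl)).
  + rewrite (kx_rl Hc G1 G2 (mem2 _ (in2 _ aw (negbT Sa))) (mem1 _ (in1 _ bw Sb))) !pc_stdp.
    rewrite (colcmp GV aw bw); case: (eqVneq (pc a) (pc b)) => [e|ne]; last first.
      by rewrite ?(ord_neq_nat ne) ?(negbTE ne) ?andbF ?orbF.
    have [hc _] := hS b a bw aw Sb (negbT Sa); move: (hc (esym e)); rewrite e !ltnn eqxx /=.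
    case: (Hc (pc b)) => -> [h1 h2]; last by rewrite (h2 erefl).
    by rewrite ltnNge (ltnW (h1 erefl)).
  + by rewrite (kx_rr c (stdG V1) G2 (mem2 _ (in2 _ aw (negbT Sa))) (mem2 _ (in2 _ bw (negbT Sb)))) !px_stdp rk_ltE ?in2 ?Sa.
- move=> a b aw bw; rewrite /f; case Sa: (S a); case Sb: (S b).
  + by rewrite (ky_ll r (stdG V2) G1 (mem1 _ (in1 _ aw Sa)) (mem1 _ (in1 _ bw Sb))) !py_stdp rk_ltE ?in1.
  + rewrite (ky_lr Hr G1 G2 (mem1 _ (in1 _ aw Sa)) (mem2 _ (in2 _ bw (negbT Sb)))) !pr_stdp.
    rewrite (rowcmp GV aw bw); case: (eqVneq (pr a) (pr b)) => [e|ne]; last first.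
      by rewrite ?(ord_neq_nat ne) ?(negbTE ne) ?andbF ?orbF.
    have [_ hc] := hS a b aw bw Sa (negbT Sb); move: (hc e); rewrite e !ltnn eqxx /=.
    case: (Hr (pr b)) => -> [h1 h2]; first by rewrite (h1 erefl).
    by rewrite ltnNge (ltnW (h2 erefl)).
  + rewrite (ky_rl Hr G1 G2 (mem2 _ (in2 _ aw (negbT Sa))) (mem1 _ (in1 _ bw Sb))) !pr_stdp.
    rewrite (rowcmp GV aw bw); case: (eqVneq (pr a) (pr b)) => [e|ne]; last first.
      by rewrite ?(ord_neq_nat ne) ?(negbTE ne) ?andbF ?orbF.
    have [_ hc] := hS b a bw aw Sb (negbT Sa); move: (hc (esym e)); rewrite e !ltnn eqxx /=.
    case: (Hr (pr b)) => -> [h1 h2]; last by rewrite (h2 erefl).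
    by rewrite ltnNge (ltnW (h1 erefl)).
  + by rewrite (ky_rr r (stdG V1) G2 (mem2 _ (in2 _ aw (negbT Sa))) (mem2 _ (in2 _ bw (negbT Sb)))) !py_stdp rk_ltE ?in2 ?Sa.
- by move=> a _; rewrite /f; case: (S a).
- by move=> a _; rewrite /f; case: (S a).
Qed.


Lemma splitB sg tau : gridded M sg -> gridded M tau -> msum c r sg tau = stdG V ->
  exists S, [/\ split_ok V S, sg = stdG (filter S V) & tau = stdG (filter (predC S) V)].
Proof.
move=> Gs Gt E.
rewrite (msum_std Hc Hr Gs Gt) in E.
have GW := msum_gcfg Hc Hr Gs Gt HM.
set w := tg sg tau in E GW.
pose g := stdp (kxm c sg tau) (kym r sg tau) (@colm m n) (@rowm m n) w.
pose h := stdpG V.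
have E' : sort (@pxle m n) (map g w) = sort (@pxle m n) (map h V) := E.
have P : perm_eq (map g w) (map h V).
  by rewrite -(perm_sort (@pxle m n) (map g w)) E' perm_sortl.
have ginj : {in w &, injective g}.
  move=> a b aw bw e; apply: (rk_inj (g_injx GW)) => //.
  exact: (congr1 (@px m n) e).
pose A := map g (map inl sg); pose A' := map g (map inr tau).
have wA : map g w = A ++ A' by rewrite /w /tg map_cat.
have disj z : z \in A -> z \in A' -> False.
  case/mapP => _ /mapP[x xs ->] ->; case/mapP => _ /mapP[y ys ->] e.
  have := ginj _ _ _ _ e; rewrite ?mem_tgl ?mem_tgr => /(_ xs ys) //.
pose S := fun p => h p \in A.
have tr a b z1 z2 : a \in V -> b \in V -> z1 \in w -> z2 \in w -> h a = g z1 -> h b = g z2 ->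
    (px a < px b) = (kxm c sg tau z1 < kxm c sg tau z2).
  move=> aw bw z1w z2w ea eb.
  have e1 := congr1 (@px m n) ea; have e2 := congr1 (@px m n) eb.
  rewrite !px_stdp in e1 e2.
  by rewrite -(@rk_ltE _ (@px m n) V a b aw) e1 e2 rk_ltE.
have try' a b z1 z2 : a \in V -> b \in V -> z1 \in w -> z2 \in w -> h a = g z1 -> h b = g z2 ->
    (py a < py b) = (kym r sg tau z1 < kym r sg tau z2).
  move=> aw bw z1w z2w ea eb.
  have e1 := congr1 (@py m n) ea; have e2 := congr1 (@py m n) eb.
  rewrite !py_stdp in e1 e2.
  by rewrite -(@rk_ltE _ (@py m n) V a b aw) e1 e2 rk_ltE.
have hL a : a \in V -> S a -> exists2 x, x \in sg & h a = g (inl x).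
  by move=> aw /mapP[_ /mapP[x xs ->] ->]; exists x.
have hR a : a \in V -> ~~ S a -> exists2 y, y \in tau & h a = g (inr y).
  move=> aw nS; have : h a \in map g w by rewrite (perm_mem P) map_f.
  have nA : (h a \in A) = false := negbTE nS.
  rewrite wA mem_cat nA /= => /mapP[_ /mapP[y ys ->] ->]; by exists y.
pose unl (q : gpoint m n) : gpoint m n := (px q - dx_s c tau q, py q - dy_s r tau q, pc q, pr q).
pose unr (q : gpoint m n) : gpoint m n := (px q - dx_t c sg q, py q - dy_t r sg q, pc q, pr q).
have unlK x : x \in sg -> unl (g (inl x)) = x.
  move=> xs; rewrite /g (gl Hc Hr Gs Gt xs) /unl /= !addnK.
  by case: x xs => [[[? ?] ?] ?].
have unrK x : x \in tau -> unr (g (inr x)) = x.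
  move=> xs; rewrite /g (gr Hc Hr Gs Gt xs) /unr /= !addnK.
  by case: x xs => [[[? ?] ?] ?].
exists S; split.
- move=> a b aw bw Sa nSb.
  have [x xs ea] := hL a aw Sa; have [y ys eb] := hR b bw nSb.
  have ca : pc a = pc x := congr1 (@pc m n) ea.
  have cb : pc b = pc y := congr1 (@pc m n) eb.
  have ra : pr a = pr x := congr1 (@pr m n) ea.
  have rb : pr b = pr y := congr1 (@pr m n) eb.
  have xw : inl x \in w by rewrite mem_tgl.
  have yw : inr y \in w by rewrite mem_tgr.
  split => e.
  + rewrite (tr a b _ _ aw bw xw yw ea eb) (tr b a _ _ bw aw yw xw eb ea).
    rewrite (kx_lr Hc Gs Gt xs ys) (kx_rl Hc Gs Gt ys xs) -ca -cb e !ltnn eqxx /=.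
    by split => ->.
  + rewrite (try' a b _ _ aw bw xw yw ea eb) (try' b a _ _ bw aw yw xw eb ea).
    rewrite (ky_lr Hr Gs Gt xs ys) (ky_rl Hr Gs Gt ys xs) -ra -rb e !ltnn eqxx /=.
    by split => ->.
- rewrite -[LHS](gridded_std Gs); symmetry; apply: (std_iso (f := unl \o h)).
  + rewrite map_comp (_ : filter S V = filter (preim h (mem A)) V) // -filter_map.
    apply: perm_trans (perm_map unl (perm_filter _ (perm_symI P))) _.
    rewrite wA filter_cat (_ : filter (mem A) A = A); last by apply/all_filterP/allP.
    rewrite (_ : filter (mem A) A' = [::]) ?cats0; last first.
      rewrite -(filter_pred0 A'); apply: eq_in_filter => z zA' /=.
      by apply/negbTE/negP => zA; exact: disj zA zA'.
    rewrite /A -map_comp (_ : map (unl \o g) _ = sg) //.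
    rewrite -map_comp -[RHS]map_id; apply/eq_in_map => x xs /=; exact: unlK.
  + exact: g_injx (gridded_gcfg Gs).
  + move=> a b; rewrite !mem_filter => /andP[Sa aw] /andP[Sb bw].
    have [x xs ea] := hL a aw Sa; have [y ys eb] := hL b bw Sb.
    rewrite /= ea eb !unlK // (tr a b _ _ aw bw _ _ ea eb) ?mem_tgl //.
    exact: (kx_ll c tau Gs xs ys).
  + move=> a b; rewrite !mem_filter => /andP[Sa aw] /andP[Sb bw].
    have [x xs ea] := hL a aw Sa; have [y ys eb] := hL b bw Sb.
    rewrite /= ea eb !unlK // (try' a b _ _ aw bw _ _ ea eb) ?mem_tgl //.
    exact: (ky_ll r tau Gs xs ys).
  + by [].
  + by [].
- rewrite -[LHS](gridded_std Gt); symmetry; apply: (std_iso (f := unr \o h)).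
  + rewrite map_comp (_ : filter (predC S) V = filter (preim h (predC (mem A))) V) // -filter_map.
    apply: perm_trans (perm_map unr (perm_filter _ (perm_symI P))) _.
    rewrite wA filter_cat (_ : filter (predC (mem A)) A' = A'); last first.
      apply/all_filterP/allP => z zA' /=; apply/negP => zA; exact: disj zA zA'.
    rewrite (_ : filter (predC (mem A)) A = [::]) ?cat0s; last first.
      rewrite -(filter_pred0 A); apply: eq_in_filter => z zA /=.
      by rewrite zA.
    rewrite /A' -map_comp (_ : map (unr \o g) _ = tau) //.
    rewrite -map_comp -[RHS]map_id; apply/eq_in_map => x xs /=; exact: unrK.
  + exact: g_injx (gridded_gcfg Gt).
  + move=> a b; rewrite !mem_filter => /andP[Sa aw] /andP[Sb bw].
    have [x xs ea] := hR a aw Sa; have [y ys eb] := hR b bw Sb.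
    rewrite /= ea eb !unrK // (tr a b _ _ aw bw _ _ ea eb) ?mem_tgr //.
    exact: (kx_rr c sg Gt xs ys).
  + move=> a b; rewrite !mem_filter => /andP[Sa aw] /andP[Sb bw].
    have [x xs ea] := hR a aw Sa; have [y ys eb] := hR b bw Sb.
    rewrite /= ea eb !unrK // (try' a b _ _ aw bw _ _ ea eb) ?mem_tgr //.
    exact: (ky_rr r sg Gt xs ys).
  + by [].
  + by [].
Qed.

End Split.

From mathcomp Require Import all_boot all_order all_algebra.
From Stdlib Require Import Classical.
Import GRing.Theory Num.Theory.
Set Implicit Arguments. Unset Strict Implicit. Unset Printing Implicit Defensive.

Section Core.
Variables (T : eqType) (bef : T -> T -> Prop).

Definition initialP (V : seq T) (Y : pred T) :=
  {in V &, forall a b, Y a -> ~~ Y b -> bef a b}.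

Definition indiv (X : seq T) :=
  X != [::] /\ forall Y : pred T, initialP X Y -> has Y X -> all Y X.

Fixpoint dec (V : seq T) (Bs : seq (seq T)) : Prop :=
  match Bs with
  | [::] => V = [::]
  | B :: Bs' => [/\ B = filter (mem B) V, initialP V (mem B), indiv B &
                   dec (filter (predC (mem B)) V) Bs']
  end.

Lemma filter_canon (V : seq T) (Y : pred T) : filter (mem (filter Y V)) V = filter Y V.
Proof. by apply: eq_in_filter => x xV; have := mem_filter Y x V; rewrite xV andbT. Qed.

Lemma exists_indiv n0 (V : seq T) (Y : pred T) : count Y V <= n0 -> has Y V -> initialP V Y ->
  exists Z : pred T, [/\ has Z V, initialP V Z & indiv (filter Z V)].
Proof.
elim: n0 Y => [|k IH] Y.
  by rewrite leqn0 => /eqP c0; rewrite has_count c0.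
move=> ck hY iY.
have [ind|nind] := classic (indiv (filter Y V)); first by exists Y.
have ne : filter Y V != [::] by rewrite -size_eq0 size_filter -lt0n -has_count.
have [Y' hY'] : exists Y' : pred T, ~ (initialP (filter Y V) Y' -> has Y' (filter Y V) -> all Y' (filter Y V)).
  by apply: not_all_ex_not => H; apply: nind; split.
have i1 : initialP (filter Y V) Y'.
  by apply: NNPP => H; apply: hY' => H'; case: (H H').
have h1 : has Y' (filter Y V).
  by apply: NNPP => H; apply: hY' => _ H'; case: (H H').
have na1 : ~~ all Y' (filter Y V).
  by apply/negP => H; apply: hY' => _ _.
apply: (IH (predI Y Y')).
- rewrite -ltnS; apply: (leq_trans _ ck).
  have : count (predI Y Y') V + count (predI Y (predC Y')) V = count Y V.
    rewrite -count_predUI (@eq_count _ (predI _ _) pred0) ?count_pred0 ?addn0.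
      by apply: eq_count => x /=; case: (Y x); case: (Y' x).
    by move=> x /=; case: (Y x); case: (Y' x).
  move=> <-; rewrite -{1}[count (predI Y Y') V]addn0 ltn_add2l -has_count.
  move: na1; rewrite -has_predC => /hasP[x]; rewrite mem_filter => /andP[Yx xV] nY'x.
  by apply/hasP; exists x => //=; rewrite Yx.
- move: h1 => /hasP[x]; rewrite mem_filter => /andP[Yx xV] Y'x.
  by apply/hasP; exists x => //=; rewrite Yx.
- move=> a b aV bV /andP[Ya Y'a] nI.
  case Yb: (Y b); last by apply: iY => //; rewrite Yb.
  have nY'b : ~~ Y' b by move: nI; rewrite /= Yb.
  by apply: i1 => //; rewrite mem_filter ?Ya ?Yb ?aV ?bV.
Qed.


Lemma size_filter_lt (V : seq T) (P : pred T) x : x \in V -> ~~ P x -> size (filter P V) < size V.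
Proof.
move=> xV nPx; rewrite size_filter -(count_predC P V) -{1}[count P V]addn0 ltn_add2l -has_count.
by apply/hasP; exists x.
Qed.

Lemma exists_dec k (V : seq T) : size V <= k -> exists Bs, dec V Bs.
Proof.
elim: k V => [|k IH] V.
  by rewrite leqn0 size_eq0 => /eqP ->; exists [::].
move=> sV; case: (altP (V =P [::])) => [->|nV]; first by exists [::].
have hT : has predT V by case: V nV {sV}.
have iT : initialP V predT by [].
have [Z [hZ iZ indZ]] := @exists_indiv (size V) V predT (count_size _ _) hT iT.
pose B := filter Z V.
have [x xV Zx] := hasP hZ.
have xB : x \in B by rewrite mem_filter Zx xV.
have nP : ~~ predC (mem B) x by rewrite /= xB.
have [Bs dBs] := IH (filter (predC (mem B)) V) (leq_trans (size_filter_lt xV nP) sV).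
exists (B :: Bs); split => //.
- by rewrite filter_canon.
- move=> a b aV bV; rewrite /= !mem_filter aV bV !andbT; exact: iZ.
Qed.

Lemma dec_nil V Bs : dec V Bs -> V = [::] -> Bs = [::].
Proof.
case: Bs => // B Bs /= [eB _ [nB _] _] V0; move: nB; by rewrite eB V0.
Qed.

Lemma uniq_dec k V Bs Cs : size V <= k -> dec V Bs -> dec V Cs -> perm_eq Bs Cs.
Proof.
elim: k V Bs Cs => [|k IH] V Bs Cs.
  rewrite leqn0 size_eq0 => /eqP V0 dB dC; by rewrite (dec_nil dB V0) (dec_nil dC V0).
move=> sV dB dC; case: Bs dB => [|B Bs] dB.
  by rewrite (dec_nil dC dB).
case: Cs dC => [|C Cs] dC.
  by have := dec_nil dB dC.
case: dB => eB iB indB dBs; case: dC => eC iC indC dCs.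
have subB : {subset B <= V} by rewrite eB => x; rewrite mem_filter => /andP[].
have subC : {subset C <= V} by rewrite eC => x; rewrite mem_filter => /andP[].
have sIB : initialP B (predI (mem B) (mem C)).
  move=> a b aB bB /andP[_ aC] nI; have nbC : b \notin C by move: nI; rewrite /= bB.
  exact: iC (subB _ aB) (subB _ bB) aC nbC.
have sIC : initialP C (predI (mem B) (mem C)).
  move=> a b aC bC /andP[aB _] nI; have nbB : b \notin B by move: nI; rewrite /= bC andbT.
  exact: iB (subC _ aC) (subC _ bC) aB nbB.
have [xb xbB _] : exists2 x, x \in B & True.
  by case: (B) (indB.1) => // x ? _; exists x; rewrite ?inE ?eqxx.
have [xc xcC _] : exists2 x, x \in C & True.
  by case: (C) (indC.1) => // x ? _; exists x; rewrite ?inE ?eqxx.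
have szB : size (filter (predC (mem B)) V) <= k.
  by rewrite -ltnS; apply: leq_trans sV; apply: (size_filter_lt (subB _ xbB)); rewrite /= xbB.
have szC : size (filter (predC (mem C)) V) <= k.
  by rewrite -ltnS; apply: leq_trans sV; apply: (size_filter_lt (subC _ xcC)); rewrite /= xcC.
case: (boolP (has (predI (mem B) (mem C)) B)) => hI.
  have aB := indB.2 _ sIB hI.
  have hIC : has (predI (mem B) (mem C)) C.
    by case/hasP: hI => x _ /andP[xB xC]; apply/hasP; exists x => //; apply/andP.
  have aC := indC.2 _ sIC hIC.
  have eBC : B = C.
    rewrite eB eC; apply: eq_in_filter => x xV; apply/idP/idP => h.
      by case/andP: (allP aB x h).
    by case/andP: (allP aC x h).
  rewrite -eBC in dCs *; rewrite perm_cons; exact: IH _ _ _ szB dBs dCs.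
have dBC x : x \in B -> x \in C -> False.
  by move=> xB xC; move/hasP: hI; apply; exists x => //; apply/andP.
pose V1 := filter (predC (mem B)) V; pose V2 := filter (predC (mem C)) V.
pose R := filter (predC (mem C)) V1.
have eR : filter (predC (mem B)) V2 = R.
  by rewrite /R /V1 /V2 -!filter_predI; apply: eq_filter => x /=; rewrite andbC.
have [Rs dR] := exists_dec (leqnn (size R)).
have dV1 : dec V1 (C :: Rs).
  split => //.
  - rewrite /V1 -filter_predI {1}eC; apply: eq_in_filter => x xV.
    apply/idP/andP => [xC|[]//]; split=> //; apply/negP => xB; exact: dBC xB xC.
  - move=> a b; rewrite /V1 !mem_filter => /andP[_ aV] /andP[_ bV]; exact: iC.
have dV2 : dec V2 (B :: Rs).
  split => //; last by rewrite eR.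
  - rewrite /V2 -filter_predI {1}eB; apply: eq_in_filter => x xV.
    apply/idP/andP => [xB|[]//]; split=> //; apply/negP => xC; exact: dBC xB xC.
  - move=> a b; rewrite /V2 !mem_filter => /andP[_ aV] /andP[_ bV]; exact: iB.
have p1 := IH V1 Bs (C :: Rs) szB dBs dV1.
have p2 := IH V2 Cs (B :: Rs) szC dCs dV2.
have h1 : perm_eq (B :: Bs) (B :: C :: Rs) by rewrite perm_cons.
have h2 : perm_eq (B :: C :: Rs) (C :: B :: Rs) by apply/permP => P /=; rewrite addnCA.
have h3 : perm_eq (C :: B :: Rs) (C :: Cs) by rewrite perm_cons perm_sym.
exact: perm_trans h1 (perm_trans h2 h3).
Qed.

End Core.

From mathcomp Require Import all_boot all_order all_algebra.
Import GRing.Theory Num.Theory.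
Set Implicit Arguments. Unset Strict Implicit. Unset Printing Implicit Defensive.

Section Final.
Variables (m n : nat) (c : 'I_m -> int) (r : 'I_n -> int).
Hypothesis Hc : forall i, c i = 1%R \/ c i = (-1)%R.
Hypothesis Hr : forall j, r j = 1%R \/ r j = (-1)%R.
Variable (M : 'M[int]_(m, n)).
Hypothesis HM : forall i j, M i j != 0%R -> M i j = (c i * r j)%R.
Local Notation stdG := (std (@px m n) (@py m n) (@pc m n) (@pr m n)).
Local Notation gcfgG := (gcfg (@px m n) (@py m n) (@pc m n) (@pr m n) M).

Definition befG (a b : gpoint m n) : Prop :=
     (pc a = pc b -> (c (pc a) = 1%R -> px a < px b) /\ (c (pc a) = (-1)%R -> px b < px a)) /\
     (pr a = pr b -> (r (pr a) = 1%R -> py a < py b) /\ (r (pr a) = (-1)%R -> py b < py a)).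

Lemma gridded_nil : gridded M ([::] : gperm m n).
Proof. by split; [split|]. Qed.

Lemma indiv_gridded s : indivisible M c r s -> gridded M s.
Proof. by case. Qed.

Lemma msumL_gridded qs : (forall s, s \in qs -> gridded M s) -> gridded M (msumL c r qs).
Proof.
elim: qs => [|q qs IH] H /=; first exact: gridded_nil.
apply: (msum_gridded Hc Hr) => //; first by apply: H; rewrite mem_head.
by apply: IH => s hs; apply: H; rewrite inE hs orbT.
Qed.

Lemma stdG_nil : stdG [::] = [::]. Proof. by []. Qed.

Lemma stdG_eq0 V : (stdG V == [::]) = (V == [::]).
Proof. by rewrite -!size_eq0 size_std. Qed.

Lemma L1 Bs : forall V, gcfgG V -> dec befG V Bs ->
  msumL c r (map stdG Bs) = stdG V /\ (forall s, s \in map stdG Bs -> indivisible M c r s).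
Proof.
elim: Bs => [|B Bs IH] V GV /=.
  by move=> ->; split.
case=> eB iB indB dBs.
have GV' := gcfg_filter (predC (mem B)) GV.
have [IH1 IH2] := IH _ GV' dBs.
have GB : gcfgG B by rewrite eB; apply: gcfg_filter.
split.
  rewrite IH1 (_ : stdG B = stdG (filter (mem B) V)); last by rewrite -eB.
  exact: (splitA Hc Hr HM GV iB).
move=> s; rewrite inE => /orP[/eqP->|]; last exact: IH2.
split.
- exact: std_gridded GB.
- by rewrite stdG_eq0; exact: indB.1.
- move=> [sg [tau [Gs Gt ns nt E]]].
  have [S [hS e1 e2]] := splitB Hc Hr HM Gs Gt E.
  have hSB : has S B.
    by move: ns; rewrite e1 stdG_eq0 -size_eq0 size_filter -lt0n -has_count.
  have aS := indB.2 S hS hSB.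
  move: nt; rewrite e2 stdG_eq0 -size_eq0 size_filter (@eq_in_count _ _ pred0).
    by rewrite count_pred0.
  by move=> x xB /=; rewrite (allP aS x xB).
Qed.

Lemma L2 qs : forall V, gcfgG V -> (forall s, s \in qs -> indivisible M c r s) ->
  msumL c r qs = stdG V -> exists Bs, dec befG V Bs /\ qs = map stdG Bs.
Proof.
elim: qs => [|q qs IH] V GV Hind /=.
  move=> E; exists [::]; split => //=.
  by apply/eqP; rewrite -stdG_eq0 -E.
move=> E.
have [Gq nq ndq] := Hind q (mem_head _ _).
have Hind' s : s \in qs -> indivisible M c r s by move=> hs; apply: Hind; rewrite inE hs orbT.
have Gr : gridded M (msumL c r qs).
  by apply: msumL_gridded => s hs; apply: indiv_gridded; apply: Hind'.
have [S [hS eq1 eq2]] := splitB Hc Hr HM Gq Gr E.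
pose B := filter S V.
have GV' := gcfg_filter (predC S) GV.
have GB : gcfgG B := gcfg_filter S GV.
have [Cs [dCs eCs]] := IH _ GV' Hind' eq2.
exists (B :: Cs); split; last by rewrite /= eCs eq1.
split.
- by rewrite filter_canon.
- move=> a b aV bV; rewrite /= !mem_filter aV bV !andbT; exact: hS.
- split; first by move: nq; rewrite eq1 stdG_eq0.
  move=> Y hY hasY; apply/negPn/negP => nall; apply: ndq.
  exists (stdG (filter Y B)), (stdG (filter (predC Y) B)); split.
  + exact: std_gridded (gcfg_filter _ GB).
  + exact: std_gridded (gcfg_filter _ GB).
  + by rewrite stdG_eq0 -size_eq0 size_filter -lt0n -has_count.
  + by rewrite stdG_eq0 -size_eq0 size_filter -lt0n -has_count has_predC.
  + by rewrite eq1; exact: (splitA Hc Hr HM GB hY).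
- rewrite (_ : filter (predC (mem B)) V = filter (predC S) V) //.
  by apply: eq_in_filter => x xV /=; rewrite mem_filter xV andbT.
Qed.

End Final.

Local Open Scope ring_scope.

Theorem lemma3p4 (m n : nat) (M : 'M[int]_(m, n))
  (c : 'I_m -> int) (r : 'I_n -> int)
  (HMent : forall i j, M i j = 0 \/ M i j = 1 \/ M i j = -1)
  (Hc : forall i, c i = 1 \/ c i = -1)
  (Hr : forall j, r j = 1 \/ r j = -1)
  (HM : forall i j, M i j != 0 -> M i j = c i * r j)
  (pi : gperm m n) (Hpi : gridded M pi) :
  exists ps : seq (gperm m n),
    [/\ (forall s, s \in ps -> indivisible M c r s),
        msumL c r ps = pi &
        forall qs : seq (gperm m n),
          (forall s, s \in qs -> indivisible M c r s) ->
          msumL c r qs = pi ->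
          size qs = size ps /\ perm_eq qs ps].
Proof.
have GV := gridded_gcfg Hpi; have Epi := gridded_std Hpi.
have [Bs dBs] := exists_dec (befG c r) (leqnn (size pi)).
have [e1 e2] := L1 Hc Hr HM GV dBs.
exists (map (std (@px m n) (@py m n) (@pc m n) (@pr m n)) Bs); split => //.
  by rewrite e1 Epi.
move=> qs Hq Eq.
have [Cs [dCs eCs]] := L2 Hc Hr HM GV Hq (etrans Eq (esym Epi)).
have P := uniq_dec (leqnn _) dCs dBs.
have Pq : perm_eq qs (map (std (@px m n) (@py m n) (@pc m n) (@pr m n)) Bs).
  by rewrite eCs; exact: perm_map.
by split; [exact: perm_size Pq | exact: Pq].
Qed.
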